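(* Suppose $X^*\in\operatorname{relint}\mathcal X$ (each $X_i^*$ positive definite) is consistently asymptotically stable under the flow $\Phi$. Then for every sufficiently small compact neighborhood $U$ of $X^*$ in $\operatorname{relint}\mathcal X$, $$\lim_{t\to\infty}\sup_{X\in U}\|\Phi_t(X)-X^*\|=0.$$
   Context: Quantum game with players $i\in\{1,\dots,N\}$; $\mathbb H^{d}$ is the real vector space of $d\times d$ complex Hermitian matrices; $\mathcal X_i=\{X_i\in\mathbb H^{d_i}:X_i\succeq0,\operatorname{tr}X_i=1\}$, $\mathcal X=\prod_i\mathcal X_i$, with any norm $\|\cdot\|$. Payoffs $u_i(X)=\sum_{\omega\in\Omega}U_i(\omega)\operatorname{tr}[P_\omega(X_1\otimes\cdots\otimes X_N)]$; payoff gradient $V_i(X)\in\mathbb H^{d_i}$ with $u_i(A;X_{-i})=\operatorname{tr}(AV_i(X))$. Regularizers $h_i(X_i)=\operatorname{tr}\theta_i(X_i)$ with $\theta_i:[0,1]\to\mathbb R$ continuous, twice differentiable on $(0,1]$, $\theta_i(0)=0$, $\inf_{(0,1]}\theta_i''>0$, and steep ($\lim_{x\to0^+}\theta_i'(x)=-\infty$). Mirror map $Q_i(Y_i)=\arg\max_{X_i\in\mathcal X_i}\{\operatorname{tr}(Y_iX_i)-h_i(X_i)\}$. FTQL dynamics $\dot Y_i=V_i(X)$, $X_i=Q_i(Y_i)$. Standing assumption: the dynamics induce a continuous flow $\Phi:\mathbb R_{\ge0}\times\mathcal X\to\mathcal X$ with $\Phi_t(Q(Y))=Q(Y(t))$ for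 each FTQL solution with $Y(0)=Y$ (and, outside the image of $Q$, given by the dynamics restricted to the relevant face of $\mathcal X$). $X^*$ is Lyapunov stable if for every neighborhood $U$ of $X^*$ in $\mathcal X$ there is a neighborhood $U'$ with $\Phi_t(U')\subseteq U$ for all $t\ge0$. Domain of consistency of $P\in\mathcal X$: $\mathcal X_P=\{X\in\mathcal X:\ker X_i\subseteq\ker P_i\ \forall i\}$. $P$ is consistently attracting if there is a neighborhood $U$ of $P$ with $\Phi_t(X)\to P$ for all $X\in U\cap\mathcal X_P$; consistently asymptotically stable if Lyapunov stable and consistently attracting. *)

(* Defs.v *)
From mathcomp Require Import all_boot all_order all_algebra.
From mathcomp Require Import sesquilinear spectral complex.
From mathcomp Require Import all_classical all_reals all_analysis.

Set Implicit Arguments.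
Unset Strict Implicit.
Unset Printing Implicit Defensive.

Import Order.TTheory GRing.Theory Num.Theory.
Local Open Scope classical_set_scope.
Local Open Scope ring_scope.

Definition cmod (R : realType) (z : complex R) : R :=
  Num.sqrt (complex.Re z ^+ 2 + complex.Im z ^+ 2).

Definition hermitian (R : realType) (n : nat) (A : 'M[complex R]_n) : Prop :=
  A \is hermsymmx.

Definition adjv (R : realType) (n : nat) (v : 'cV[complex R]_n) : 'rV[complex R]_n :=
  (map_mx Num.conj v)^T.

Definition psd (R : realType) (n : nat) (A : 'M[complex R]_n) : Prop :=
  hermitian A /\ forall v : 'cV[complex R]_n, 0 <= (adjv v *m A *m v) 0 0.

Definition pd (R : realType) (n : nat) (A : 'M[complex R]_n) : Prop :=
  hermitian A /\ forall v : 'cV[complex R]_n, v != 0 -> 0 < (adjv v *m A *m v) 0 0.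

Definition density (R : realType) (n : nat) (A : 'M[complex R]_n) : Prop :=
  psd A /\ \tr A = 1.

Definition profile (R : realType) (N : nat) (d : 'I_N -> nat) : Type :=
  forall i : 'I_N, 'M[complex R]_(d i).

Definition state_space (R : realType) (N : nat) (d : 'I_N -> nat)
  : set (profile R d) :=
  [set X | forall i, density (X i)].
Arguments state_space {R N} d _.

Definition relint_state (R : realType) (N : nat) (d : 'I_N -> nat)
  : set (profile R d) :=
  [set X | forall i, density (X i) /\ pd (X i)].
Arguments relint_state {R N} d _.

Definition pdist (R : realType) (N : nat) (d : 'I_N -> nat) (X Y : profile R d) : R :=
  \big[Num.max/0]_(i < N) \big[Num.max/0]_(a < d i) \big[Num.max/0]_(b < d i)
     cmod (X i a b - Y i a b).

Definition nbhs_in (R : realType) (N : nat) (d : 'I_N -> nat)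
  (X0 : profile R d) (U : set (profile R d)) : Prop :=
  U `<=` state_space d /\
  exists2 e : R, 0 < e &
    forall X, state_space d X -> pdist X X0 < e -> U X.

Definition seq_compact (R : realType) (N : nat) (d : 'I_N -> nat)
  (K : set (profile R d)) : Prop :=
  forall u : nat -> profile R d, (forall n, K (u n)) ->
    exists (phi : nat -> nat) (L : profile R d),
      {homo phi : m n / (m < n)%N >-> (m < n)%N} /\ K L /\
      forall e : R, 0 < e -> exists M : nat, forall n, (M <= n)%N ->
        pdist (u (phi n)) L < e.

(* index set of the tensor product space C^{d_1} (x) ... (x) C^{d_N} *)
Definition tens_index (N : nat) (d : 'I_N -> nat) : finType :=
  {dffun forall i : 'I_N, 'I_(d i)}.

Definition tens_op (R : realType) (N : nat) (d : 'I_N -> nat) : Type :=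
  tens_index d -> tens_index d -> complex R.

Definition tensor (R : realType) (N : nat) (d : 'I_N -> nat) (X : profile R d)
  : tens_op R d :=
  fun j k => \prod_(i < N) X i (j i) (k i).

Definition POVM (R : realType) (N : nat) (d : 'I_N -> nat) (Om : finType)
  (P : Om -> tens_op R d) : Prop :=
  (forall w j k, P w j k = Num.conj (P w k j)) /\
  (forall w (v : tens_index d -> complex R),
      0 <= \sum_(j : tens_index d) \sum_(k : tens_index d)
              Num.conj (v j) * P w j k * v k) /\
  (forall j k, \sum_(w : Om) P w j k = (j == k)%:R).

Definition payoff (R : realType) (N : nat) (d : 'I_N -> nat) (Om : finType)
  (U : 'I_N -> Om -> R) (P : Om -> tens_op R d) (i : 'I_N) (X : profile R d) : R :=
  complex.Re (\sum_(w : Om) (U i w)%:C%C *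
     \sum_(j : tens_index d) \sum_(k : tens_index d) P w j k * tensor X k j).

Definition payoff_gradient (R : realType) (N : nat) (d : 'I_N -> nat) (Om : finType)
  (U : 'I_N -> Om -> R) (P : Om -> tens_op R d) (V : profile R d -> profile R d)
  : Prop :=
  forall X, state_space d X -> forall i,
    hermitian (V X i) /\
    forall A : 'M[complex R]_(d i), hermitian A ->
      ((payoff U P i (dfwith X i A))%:C)%C = \tr (A *m V X i).

Definition regularizer_kernel (R : realType) (theta : R -> R) : Prop :=
  (forall x, 0 <= x <= 1 -> forall e : R, 0 < e ->
     exists2 del : R, 0 < del &
       forall y, 0 <= y <= 1 -> `|y - x| < del -> `|theta y - theta x| < e) /\
  (forall x, 0 < x < 1 -> derivable theta x 1 /\ derivable (derive1 theta) x 1) /\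
  theta 0 = 0 /\
  (exists2 c : R, 0 < c & forall x, 0 < x < 1 -> c <= derive1n 2 theta x) /\
  (derive1 theta x @[x --> (0:R)^'+] --> -oo)%classic.

(* h_i(X) = tr theta(X) = sum of theta over the eigenvalues of the Hermitian X *)
Definition htrace (R : realType) (n : nat) (theta : R -> R) (A : 'M[complex R]_n) : R :=
  \sum_(k < n) theta (complex.Re (spectral_diag A 0 k)).

Definition mirror (R : realType) (n : nat) (theta : R -> R)
  (Y X : 'M[complex R]_n) : Prop :=
  density X /\
  forall X' : 'M[complex R]_n, density X' ->
    complex.Re (\tr (Y *m X')) - htrace theta X' <=
    complex.Re (\tr (Y *m X)) - htrace theta X.

Definition ftql_solution (R : realType) (N : nat) (d : 'I_N -> nat)
  (V : profile R d -> profile R d) (theta : 'I_N -> R -> R)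
  (Y : R -> profile R d) : Prop :=
  (forall t, 0 <= t -> forall i, hermitian (Y t i)) /\
  forall t, 0 <= t -> forall X : profile R d,
    (forall i, mirror (theta i) (Y t i) (X i)) ->
    forall i a b,
      is_derive t 1 (fun s => complex.Re (Y s i a b)) (complex.Re (V X i a b)) /\
      is_derive t 1 (fun s => complex.Im (Y s i a b)) (complex.Im (V X i a b)).

Definition ftql_flow (R : realType) (N : nat) (d : 'I_N -> nat)
  (V : profile R d -> profile R d) (theta : 'I_N -> R -> R)
  (Phi : R -> profile R d -> profile R d) : Prop :=
  (forall t X, 0 <= t -> state_space d X -> state_space d (Phi t X)) /\
  (forall X, state_space d X -> Phi 0 X = X) /\
  (forall s t X, 0 <= s -> 0 <= t -> state_space d X ->
     Phi (s + t) X = Phi t (Phi s X)) /\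
  (forall t X, 0 <= t -> state_space d X -> forall e : R, 0 < e ->
     exists2 del : R, 0 < del &
       forall s Y, 0 <= s -> state_space d Y -> `|s - t| < del -> pdist Y X < del ->
         pdist (Phi s Y) (Phi t X) < e) /\
  (forall Y, ftql_solution V theta Y ->
     forall t, 0 <= t -> forall X0 Xt : profile R d,
       (forall i, mirror (theta i) (Y 0 i) (X0 i)) ->
       (forall i, mirror (theta i) (Y t i) (Xt i)) ->
       Phi t X0 = Xt).

Definition lyapunov_stable (R : realType) (N : nat) (d : 'I_N -> nat)
  (Phi : R -> profile R d -> profile R d) (Xs : profile R d) : Prop :=
  forall U, nbhs_in Xs U -> exists2 U', nbhs_in Xs U' &
    forall t X, 0 <= t -> U' X -> U (Phi t X).

Definition consistency_domain (R : realType) (N : nat) (d : 'I_N -> nat)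
  (P : profile R d) : set (profile R d) :=
  [set X | state_space d X /\
     forall i (v : 'cV[complex R]_(d i)), X i *m v = 0 -> P i *m v = 0].

Definition converges_to (R : realType) (N : nat) (d : 'I_N -> nat)
  (x : R -> profile R d) (L : profile R d) : Prop :=
  forall e : R, 0 < e -> exists T : R, forall t, T <= t -> pdist (x t) L < e.

Definition consistently_attracting (R : realType) (N : nat) (d : 'I_N -> nat)
  (Phi : R -> profile R d -> profile R d) (P : profile R d) : Prop :=
  exists2 U, nbhs_in P U &
    forall X, U X -> consistency_domain P X -> converges_to (Phi ^~ X) P.

Definition consistently_asymptotically_stable (R : realType) (N : nat)
  (d : 'I_N -> nat) (Phi : R -> profile R d -> profile R d) (P : profile R d)
  : Prop :=
  lyapunov_stable Phi P /\ consistently_attracting Phi P.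

(* Main.v *)
Require Import Defs.
From mathcomp Require Import all_boot all_order all_algebra.
From mathcomp Require Import sesquilinear spectral complex.
From mathcomp Require Import all_classical all_reals all_analysis.
Import Order.TTheory GRing.Theory Num.Theory.
Local Open Scope classical_set_scope.
Local Open Scope ring_scope.

Lemma cmod_ge0 (R : realType) (z : complex R) : 0 <= cmod z.
Proof. exact: sqrtr_ge0. Qed.

Lemma cmod_tri (R : realType) (x y : complex R) : cmod (x + y) <= cmod x + cmod y.
Proof.
have E : forall z : complex R, cmod z = Normc.normc z by case.
rewrite !E; exact: (@le_normcD R x y).
Qed.

Lemma pdist_ge0 (R : realType) (N : nat) (d : 'I_N -> nat) (X Y : profile R d) :
  0 <= pdist X Y.
Proof.
have G : forall n (F : 'I_n -> R), (forall i, 0 <= F i) ->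
    0 <= \big[Num.max/0]_(i < n) F i.
  move=> n F HF; elim/big_ind: _ => //.
  by move=> a b ha hb; rewrite le_max ha.
apply: (G) => i; apply: (G) => a; apply: (G) => b; exact: cmod_ge0.
Qed.

Lemma pdist_entry (R : realType) (N : nat) (d : 'I_N -> nat) (X Y : profile R d)
  i a b : cmod (X i a b - Y i a b) <= pdist X Y.
Proof.
rewrite /pdist.
apply: le_trans (le_bigmax _ _ i).
apply: le_trans (le_bigmax _ _ a).
exact: (le_bigmax _ _ b).
Qed.

Lemma pdist_tri (R : realType) (N : nat) (d : 'I_N -> nat) (X Y Z : profile R d) :
  pdist X Z <= pdist X Y + pdist Y Z.
Proof.
have h0 : 0 <= pdist X Y + pdist Y Z by rewrite addr_ge0 // (@pdist_ge0 _ _ _ _ _).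
rewrite {1}/pdist; apply: bigmax_le => // i _.
apply: bigmax_le => // a _; apply: bigmax_le => // b _.
have -> : X i a b - Z i a b = (X i a b - Y i a b) + (Y i a b - Z i a b).
  by rewrite addrA subrK.
have t1 := @cmod_tri _ (X i a b - Y i a b) (Y i a b - Z i a b).
have t2 := lerD (@pdist_entry _ _ _ X Y i a b) (@pdist_entry _ _ _ Y Z i a b).
have t3 := le_trans t1 t2.
exact: t3.
Qed.

Lemma homo_ge (phi : nat -> nat) :
  {homo phi : m n / (m < n)%N >-> (m < n)%N} -> forall n, (n <= phi n)%N.
Proof.
move=> H; elim=> // n IH; apply: leq_ltn_trans IH (H _ _ (ltnSn n)).
Qed.

Theorem lemmaD2 (R : realType) (N : nat) (d : 'I_N -> nat) (Om : finType)
  (U : 'I_N -> Om -> R) (P : Om -> tens_op R d)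
  (V : profile R d -> profile R d) (theta : 'I_N -> R -> R)
  (Phi : R -> profile R d -> profile R d) (Xs : profile R d) :
  POVM P ->
  payoff_gradient U P V ->
  (forall i, regularizer_kernel (theta i)) ->
  ftql_flow V theta Phi ->
  relint_state d Xs ->
  consistently_asymptotically_stable Phi Xs ->
  exists2 W : set (profile R d), nbhs_in Xs W &
    forall K : set (profile R d),
      K `<=` W -> K `<=` relint_state d -> nbhs_in Xs K -> seq_compact K ->
      forall e : R, 0 < e -> exists T : R, forall t, T <= t ->
        forall X, K X -> pdist (Phi t X) Xs <= e.
Proof.
move=> _ _ _ [Hst [H0 [Hsg [Hcont _]]]] Hrel [Hlyap [W0 HW0 Hatt]].
exists W0 => // K KW Krel _ Kcomp e e0.
have KS : forall X, K X -> state_space d X.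
  by move=> X KX i; exact: (Krel X KX i).1.
have [U' [U'ss [del del0 HU']] HU'Phi] :
    exists2 U', nbhs_in Xs U' & forall t X, 0 <= t -> U' X ->
      (fun X => state_space d X /\ pdist X Xs < e) (Phi t X).
  apply: (Hlyap (fun X => state_space d X /\ pdist X Xs < e)); split; first by move=> X [].
  by exists e => // X ? ?; split.
have claim : forall L, K L -> exists2 TL, 0 <= TL & exists2 g, 0 < g &
    forall Y, state_space d Y -> pdist Y L < g -> forall t, TL <= t ->
      pdist (Phi t Y) Xs < e.
  move=> L KL.
  have cons : consistency_domain Xs L.
    split; first exact: KS.
    move=> i v Hv; case: (eqVneq v 0) => [->|nz]; first by rewrite mulmx0.
    have := (Krel L KL i).2.2 v nz.
    by rewrite -mulmxA Hv mulmx0 mxE ltxx.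
  have [T HT] := Hatt L (KW L KL) cons (del / 2) (divr_gt0 del0 (ltr0Sn _ 1)).
  set TL := Num.max T 0.
  have TL0 : 0 <= TL by rewrite le_max lexx orbT.
  exists TL => //.
  have [g g0 Hg] := Hcont TL L TL0 (KS L KL) (del / 2) (divr_gt0 del0 (ltr0Sn _ 1)).
  exists g => // Y SY HY t Ht.
  have h1 := Hg TL Y TL0 SY; rewrite subrr normr0 in h1.
  have h1' := h1 g0 HY.
  have h2 : pdist (Phi TL L) Xs < del / 2 by apply: HT; rewrite le_max lexx.
  have h3 : pdist (Phi TL Y) Xs < del.
    apply: le_lt_trans (@pdist_tri _ _ _ _ (Phi TL L) _) _.
    by rewrite (splitr del); apply: ltrD.
  have SZ := Hst TL Y TL0 SY.
  have UZ := HU' _ SZ h3.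
  have -> : t = TL + (t - TL) by rewrite addrC subrK.
  rewrite Hsg //; last by rewrite subr_ge0.
  by case: (HU'Phi (t - TL) _ _ UZ); rewrite // subr_ge0.
case: (pselect (exists T : R, forall t, T <= t -> forall X, K X ->
   pdist (Phi t X) Xs <= e)) => // Hn.
have Hseq : forall n : nat, exists tX : R * profile R d,
    n%:R <= tX.1 /\ K tX.2 /\ e < pdist (Phi tX.1 tX.2) Xs.
  move=> n; apply: contrapT => H; apply: Hn; exists n%:R => t Ht X KX.
  rewrite leNgt; apply/negP => Hlt; apply: H; by exists (t, X).
pose f n := projT1 (cid (Hseq n)).
have fP : forall n, n%:R <= (f n).1 /\ K (f n).2 /\ e < pdist (Phi (f n).1 (f n).2) Xs.
  by move=> n; exact: (projT2 (cid (Hseq n))).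
have [phi [L [phim [KL conv]]]] := Kcomp (fun n => (f n).2) (fun n => (fP n).2.1).
have [TL TL0 [g g0 Hg]] := claim L KL.
have [M HM] := conv g g0.
have [n [hn1 hn2]] : exists n, (M <= n)%N /\ (Num.Def.archi_bound TL <= n)%N.
  by exists (maxn M (Num.Def.archi_bound TL)); rewrite leq_maxl leq_maxr.
have [ft [Kf ef]] := fP (phi n).
have hM := HM n hn1.
have Ht : TL <= (f (phi n)).1.
  apply: le_trans ft; apply/ltW/(lt_le_trans (archi_boundP TL0)).
  rewrite ler_nat; exact: (leq_trans hn2 (homo_ge _ phim n)).
have hh := Hg (f (phi n)).2 (KS _ Kf) hM (f (phi n)).1 Ht.
have := lt_trans ef hh.
by rewrite ltxx.
Qed.
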